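(* $\mathscr{P}$ is a strict monoidal category with daggers.
   Context: For $i\in\mathbb{N}$ let $V_i\cong\mathbb{C}^2$ with orthonormal basis $v_{i,0},v_{i,1}$, and for a finite ordered $N\subset\mathbb{N}$ let $V_N=\bigotimes_{i\in N}V_i$. For $I\subseteq N$ let $|I\rangle=\bigotimes_{i\in N}v_{i,\chi(i,I)}$ and $\langle I|=\bigotimes_{i\in N}v^*_{i,\chi(i,I)}$, where $\chi(i,I)=1$ if $i\in I$ and $0$ otherwise. For a skew-symmetric complex matrix $M$ whose rows and columns are labeled by the same ordered set $N$, let $M_I$ be the principal submatrix on labels $I$ and $M_{\bar I}$ the principal submatrix with labels $I$ removed, and define $\operatorname{sPf}(M)=\sum_{I\subseteq N}\operatorname{Pf}(M_I)|I\rangle$ and $\operatorname{sPf}^\vee(M)=\sum_{I\subseteq N}\operatorname{Pf}(M_{\bar I})\langle I|$ (Pfaffian of the empty matrix is $1$, of odd-size matrices $0$). $\mathscr{P}$ is the monoidal subcategory of $\mathrm{Vect}_\mathbb{C}$ whose objects are the spaces $V_N$ for ordered subsets $N\subset\mathbb{N}$, with the usual tensor product, and whose morphisms are generated, under composition (tensor contraction) and tensor product, by all $\operatorname{sPf}(M)$ and $\operatorname{sPf}^\vee(M)$. The dagger is the usual adjoint of linear maps. *)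

(* Defs.v *)
From HB Require Import structures.
From mathcomp Require Import all_boot all_order all_algebra.
From mathcomp Require Import reals complex.
Set Implicit Arguments. Unset Strict Implicit. Unset Printing Implicit Defensive.
Import Order.TTheory GRing.Theory Num.Theory.
Local Open Scope ring_scope.

Section Pcat.
Variable R : realType.
Local Notation C := (R[i]).

Definition skew_on (M : nat -> nat -> C) (N : seq nat) : Prop :=
  forall i j, i \in N -> j \in N -> M i j = - M j i.

Definition drop_at (k : nat) (s : seq nat) : seq nat := take k s ++ drop k.+1 s.

Fixpoint pf_aux (M : nat -> nat -> C) (n : nat) (L : seq nat) : C :=
  match n, L with
  | _, [::] => 1
  | 0, _ :: _ => 0
  | n'.+1, [:: _] => 0
  | n'.+1, x :: r =>
      \sum_(k < size r) (-1) ^+ k * M x (nth 0%N r k) * pf_aux M n' (drop_at k r)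
  end.
Definition Pf (M : nat -> nat -> C) (L : seq nat) : C := pf_aux M (size L) L.

(* A linear map V_N -> V_K (N = mdom, K = mcod, ordered label lists) is given
   by its matrix in the bases |I>: a basis vector |I> of V_N, I ⊆ N, is encoded
   by the bitseq b of length size N with I = mask b N (b_i = chi(N_i, I)).
   mcoef f b c = <b| f |c>  (output bits b, input bits c).  All morphisms built
   below vanish when b or c has the wrong length. *)
Record mor := Mor { mdom : seq nat; mcod : seq nat;
                    mcoef : seq bool -> seq bool -> C }.

Fixpoint allbits (n : nat) : seq (seq bool) :=
  if n is n'.+1 then [seq b :: s | b <- [:: false; true], s <- allbits n']
  else [:: [::]].

Definition idm (N : seq nat) : mor :=
  Mor N N (fun b c => if (b == c) && (size b == size N) then 1 else 0).

(* composition g o f (requires mcod f = mdom g): contraction *)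
Definition comp (g f : mor) : mor :=
  Mor (mdom f) (mcod g)
      (fun b c => \sum_(m <- allbits (size (mcod f))) mcoef g b m * mcoef f m c).

Definition tens (f g : mor) : mor :=
  Mor (mdom f ++ mdom g) (mcod f ++ mcod g)
      (fun b c => mcoef f (take (size (mcod f)) b) (take (size (mdom f)) c)
                * mcoef g (drop (size (mcod f)) b) (drop (size (mdom f)) c)).

(* the usual adjoint (w.r.t. the orthonormal bases v_{i,0}, v_{i,1}) *)
Definition dagger (f : mor) : mor :=
  Mor (mcod f) (mdom f) (fun b c => (mcoef f c b)^*).

Definition sPf (M : nat -> nat -> C) (N : seq nat) : mor :=
  Mor [::] N (fun b c => if (size b == size N) && (c == [::])
                         then Pf M (mask b N) else 0).

Definition sPfv (M : nat -> nat -> C) (N : seq nat) : mor :=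
  Mor N [::] (fun b c => if (b == [::]) && (size c == size N)
                         then Pf M (mask (map negb c) N) else 0).

Inductive inP : mor -> Prop :=
| inP_sPf M N : uniq N -> skew_on M N -> inP (sPf M N)
| inP_sPfv M N : uniq N -> skew_on M N -> inP (sPfv M N)
| inP_id N : inP (idm N)
| inP_comp g f : inP f -> inP g -> mcod f = mdom g -> inP (comp g f)
| inP_tens f g : inP f -> inP g -> inP (tens f g).

Definition strict_monoidal_dagger_cat (Q : mor -> Prop) : Prop :=
  (forall N, Q (idm N)) /\
  (forall f g, Q f -> Q g -> mcod f = mdom g -> Q (comp g f)) /\
  (forall f, Q f -> comp (idm (mcod f)) f = f /\ comp f (idm (mdom f)) = f) /\
  (forall f g h, Q f -> Q g -> Q h -> mcod f = mdom g -> mcod g = mdom h ->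
      comp h (comp g f) = comp (comp h g) f) /\
  (forall f g, Q f -> Q g -> Q (tens f g)) /\
  (forall N M, tens (idm N) (idm M) = idm (N ++ M)) /\
  (forall f, Q f -> tens (idm [::]) f = f /\ tens f (idm [::]) = f) /\
  (forall f g h, Q f -> Q g -> Q h -> tens (tens f g) h = tens f (tens g h)) /\
  (forall f f' g g', Q f -> Q f' -> Q g -> Q g' ->
      mcod f = mdom g -> mcod f' = mdom g' ->
      tens (comp g f) (comp g' f') = comp (tens g g') (tens f f')) /\
  (forall f, Q f -> Q (dagger f)) /\
  (forall N, dagger (idm N) = idm N) /\
  (forall f, Q f -> dagger (dagger f) = f) /\
  (forall f g, Q f -> Q g -> mcod f = mdom g ->
      dagger (comp g f) = comp (dagger f) (dagger g)) /\
  (forall f g, Q f -> Q g -> dagger (tens f g) = tens (dagger f) (dagger g)).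

End Pcat.

(* Main.v *)
Require Import Defs.
From HB Require Import structures.
From mathcomp Require Import all_boot all_order all_algebra.
From mathcomp Require Import reals complex.
From Stdlib Require Import FunctionalExtensionality.
From mathcomp Require Import zify ring.
Set Implicit Arguments. Unset Strict Implicit. Unset Printing Implicit Defensive.
Import Order.TTheory GRing.Theory Num.Theory.
Local Open Scope ring_scope.

Lemma allbitsS n : allbits n.+1 = map (cons false) (allbits n) ++ map (cons true) (allbits n).
Proof. by rewrite /= cats0. Qed.

Lemma big_allbitsS (R : realType) n (F : seq bool -> R[i]) :
  \sum_(m <- allbits n.+1) F m =
  \sum_(s <- allbits n) F (false :: s) + \sum_(s <- allbits n) F (true :: s).
Proof.
by rewrite allbitsS big_cat !big_map.
Qed.

Lemma size_allbits n m : m \in allbits n -> size m = n.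
Proof.
elim: n m => [|n IH] m; first by rewrite inE => /eqP->.
rewrite allbitsS mem_cat => /orP[] /mapP [s Hs ->] /=; by rewrite (IH _ Hs).
Qed.

Lemma sum_allbits_eq (R : realType) n (c : seq bool) (F : seq bool -> R[i]) :
  \sum_(m <- allbits n) (if m == c then F m else 0) =
  if size c == n then F c else 0.
Proof.
elim: n c F => [|n IH] c F.
  by rewrite /= big_cons big_nil addr0; case: c => //=.
rewrite big_allbitsS.
case: c => [|x c].
  by rewrite !big1 ?addr0.
rewrite (eq_bigr (fun s => if s == c then (if ~~ x then F (false :: s) else 0) else 0)); last first.
  by move=> s _; rewrite eqseq_cons; case: x => //=; case: (s == c).
rewrite [X in _ + X](eq_bigr (fun s => if s == c then (if x then F (true :: s) else 0) else 0)); last first.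
  by move=> s _; rewrite eqseq_cons; case: x => //=; case: (s == c).
rewrite !IH /= eqSS; case: (size c == n); last by rewrite addr0.
by case: x; rewrite ?addr0 ?add0r.
Qed.

Lemma sum_allbits_cat (R : realType) n1 n2 (F : seq bool -> R[i]) :
  \sum_(m <- allbits (n1 + n2)) F m =
  \sum_(m1 <- allbits n1) \sum_(m2 <- allbits n2) F (m1 ++ m2).
Proof.
elim: n1 F => [|n1 IH] F.
  by rewrite add0n /= big_cons big_nil addr0.
by rewrite addSn !big_allbitsS !IH.
Qed.

Lemma size_drop_at k (s : seq nat) : (k < size s)%N -> size (drop_at k s) = (size s).-1.
Proof.
move=> Hk; rewrite /drop_at size_cat size_take size_drop Hk.
move: Hk; case: (size s) => // n Hk; rewrite subSS /=; lia.
Qed.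

Lemma map_drop_at (g : nat -> nat) k s : drop_at k (map g s) = map g (drop_at k s).
Proof. by rewrite /drop_at map_cat map_take map_drop. Qed.

Lemma pf_aux_S (R : realType) (M : nat -> nat -> R[i]) n x r :
  pf_aux M n.+1 (x :: r) =
  \sum_(k < size r) (-1) ^+ k * M x (nth 0%N r k) * pf_aux M n (drop_at k r).
Proof. by case: r => [|y r] //=; rewrite big_ord0. Qed.

Lemma pf_aux_fuel (R : realType) (M : nat -> nat -> R[i]) n m L :
  (size L <= n)%N -> (size L <= m)%N -> pf_aux M n L = pf_aux M m L.
Proof.
elim: n m L => [|n IH] m L.
  by case: L => [|x r] //; case: m.
case: L => [|x r]; first by case: m.
case: m => [//|m] Hn Hm; rewrite !pf_aux_S; apply: eq_bigr => k _.
have Hk := ltn_ord k.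
rewrite (IH m) // size_drop_at //=; move: Hn Hm Hk => /=; lia.
Qed.

Lemma Pf_cons (R : realType) (M : nat -> nat -> R[i]) x r :
  Pf M (x :: r) =
  \sum_(k < size r) (-1) ^+ k * M x (nth 0%N r k) * Pf M (drop_at k r).
Proof.
rewrite /Pf [size (x :: r)]/= pf_aux_S; apply: eq_bigr => k _; rewrite (@pf_aux_fuel _ _ _ (size (drop_at k r))) //.
have Hk := ltn_ord k; rewrite size_drop_at //; lia.
Qed.

Lemma Pf_nil (R : realType) (M : nat -> nat -> R[i]) : Pf M [::] = 1.
Proof. by []. Qed.

Lemma Pf_odd (R : realType) (M : nat -> nat -> R[i]) L : odd (size L) -> Pf M L = 0.
Proof.
move: {2}(size L) (leqnn (size L)) => n; elim: n L => [|n IH] [|x r] //= Hs Ho.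
rewrite Pf_cons big1 // => k _; have Hk := ltn_ord k.
have Hp : (0 < size r)%N by lia.
rewrite IH ?mulr0 // size_drop_at //; first by move: Hs Hk => /=; lia.
move: Ho Hp => /=; case: (size r) => [|p] //=; by rewrite negbK.
Qed.

Lemma Pf_scale (R : realType) (M : nat -> nat -> R[i]) c L :
  Pf (fun i j => c * M i j) L = c ^+ (size L)./2 * Pf M L.
Proof.
move: {2}(size L) (leqnn (size L)) => n; elim: n L => [|n IH] [|x r] //= Hs;
  rewrite ?Pf_nil ?mulr1 //.
rewrite !Pf_cons mulr_sumr; apply: eq_bigr => k _.
have Hk := ltn_ord k.
rewrite IH; last by rewrite size_drop_at //; move: Hs Hk => /=; lia.
have Hp : (0 < size r)%N by lia.
have E : uphalf (size r) = ((size r).-1)./2.+1 by move: Hp; clear; case: (size r).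
rewrite size_drop_at //= E.
by rewrite exprS; ring.
Qed.

Lemma Pf_conj (R : realType) (M : nat -> nat -> R[i]) L :
  Pf (fun i j => (M i j)^*) L = (Pf M L)^*.
Proof.
move: {2}(size L) (leqnn (size L)) => n; elim: n L => [|n IH] [|x r] //= Hs;
  rewrite ?Pf_nil ?conjC1 //.
rewrite !Pf_cons rmorph_sum; apply: eq_bigr => k _.
have Hk := ltn_ord k.
rewrite IH; last by rewrite size_drop_at //; move: Hs Hk => /=; lia.
by rewrite !rmorphM rmorphXn rmorphN1.
Qed.

Lemma Pf_map (R : realType) (M M' : nat -> nat -> R[i]) (g : nat -> nat) L :
  (forall x y, M' (g x) (g y) = M x y) -> Pf M' (map g L) = Pf M L.
Proof.
move=> Hg; move: {2}(size L) (leqnn (size L)) => n; elim: n L => [|n IH] [|x r] //= Hs.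
rewrite !Pf_cons size_map; apply: eq_bigr => k _.
have Hk := ltn_ord k.
rewrite map_drop_at IH; last by rewrite size_drop_at //; move: Hs Hk => /=; lia.
by rewrite (nth_map 0%N) // Hg.
Qed.

Definition Mc (R : realType) (s : nat) (i j : nat) : R[i] :=
  if j == (i + s)%N then 1 else if i == (j + s)%N then -1 else 0.

Fixpoint eps (R : realType) (n : nat) : R[i] :=
  if n is n'.+1 then (-1) ^+ n' * eps R n' else 1.

Lemma subseq_drop_at (B : seq nat) i : subseq (drop_at i B) B.
Proof.
rewrite /drop_at -[X in subseq _ X](cat_take_drop i B); apply: cat_subseq => //.
by rewrite -add1n -drop_drop drop_subseq.
Qed.

Lemma subseq_perm_eq (T : eqType) (s1 s2 t : seq T) : uniq t ->
  subseq s1 t -> subseq s2 t -> s1 =i s2 -> s1 = s2.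
Proof.
move=> Ut H1 H2 E; rewrite (subseq_uniqP Ut H1) (subseq_uniqP Ut H2).
by apply: eq_filter => x; rewrite /= E.
Qed.

Lemma Pf_match (R : realType) s (N : seq nat) A B :
  uniq N -> all (fun x => x < s)%N N ->
  subseq A N -> subseq B (map (fun x => x + s)%N N) ->
  Pf (@Mc R s) (A ++ B) =
  if B == map (fun x => x + s)%N A then eps R (size A) else 0.
Proof.
set g := (fun x => x + s)%N.
move=> UN /allP HN.
have HB : forall B, subseq B (map g N) -> forall y, y \in B -> (s <= y < s + s)%N.
  move=> B' /mem_subseq H y /H /mapP [x /HN Hx ->]; rewrite /g; lia.
elim: A B => [|a A' IH] B HA HBs.
  case: B HBs => [|x r] HBs; first by rewrite Pf_nil.
  rewrite /= Pf_cons big1 // => k _.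
  have Hx := HB _ HBs x (mem_head _ _).
  have Hy := HB _ HBs (nth 0%N r k) (@mem_behead _ (x :: r) _ (mem_nth _ (ltn_ord k))).
  rewrite /Mc; have -> : (nth 0%N r k == x + s)%N = false by lia.
  have -> : (x == nth 0%N r k + s)%N = false by lia.
  by rewrite mulr0 mul0r.
have HA' : subseq A' N := subseq_trans (subseq_cons A' a) HA.
have HAs : forall y, y \in a :: A' -> (y < s)%N.
  by move=> y /(mem_subseq HA) /HN.
have Ha := HAs a (mem_head _ _).
have UA : uniq (a :: A') := subseq_uniq HA UN.
have Ug : uniq (map g N) by rewrite map_inj_uniq // => x y; rewrite /g; apply: addIn.
have UB : uniq B := subseq_uniq HBs Ug.
have UAB : uniq (A' ++ B).
  rewrite cat_uniq (subseq_uniq HA' UN) UB andbT /=; apply/hasPn => y /(HB _ HBs) Hy.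
  by apply/negP => /(fun h => HAs y (mem_behead h)); lia.
have Mca : forall y, Mc R s a y = if y == (a + s)%N then 1 else 0.
  by move=> y; rewrite /Mc; case: (y == (a + s)%N) => //; have -> : (a == y + s)%N = false by lia.
rewrite cat_cons Pf_cons.
case: (boolP ((a + s)%N \in B)) => Hin; last first.
  rewrite big1; last first.
    move=> k _; rewrite Mca; case: eqP => [E|]; last by rewrite mulr0 mul0r.
    have := mem_nth 0%N (ltn_ord k); rewrite E mem_cat (negbTE Hin) orbF.
    by move=> /(fun h => HAs _ (mem_behead h)); lia.
  case: eqP => // E; move: Hin; rewrite E /= inE eqxx //.
set i0 := index (a + s)%N B.
have Hi0 : (i0 < size B)%N by rewrite index_mem.
have Hk0 : (size A' + i0 < size (A' ++ B))%N by rewrite size_cat ltn_add2l.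
have Hnth : nth 0%N (A' ++ B) (size A' + i0) = (a + s)%N.
  by rewrite nth_cat ltnNge leq_addr /= addKn nth_index.
rewrite (bigD1 (Ordinal Hk0)) //= big1 ?addr0; last first.
  move=> k Hk; rewrite Mca; case: eqP => [E|]; last by rewrite mulr0 mul0r.
  move: Hk; rewrite -Hnth in E; move/eqP: E; rewrite nth_uniq // => /eqP E.
  by rewrite -val_eqE /= E eqxx.
rewrite Mca Hnth eqxx mulr1.
have Hdrop : drop_at (size A' + i0) (A' ++ B) = A' ++ drop_at i0 B.
  rewrite /drop_at take_cat drop_cat ltnNge leq_addr /= addKn.
  have -> : ((size A' + i0).+1 < size A')%N = false by lia.
  by rewrite -addnS addKn catA.
rewrite Hdrop (IH _ HA'); last exact: subseq_trans (subseq_drop_at _ _) HBs.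
have Bsplit : B = take i0 B ++ (a + s)%N :: drop i0.+1 B.
  by rewrite -{1}(cat_take_drop i0 B) (drop_nth 0%N Hi0) nth_index.
case: eqP => E1; case: eqP => E2 //.
- have Hi00 : i0 = 0%N by rewrite /i0 E2 /= /g eqxx.
  by rewrite Hi00 addn0.
- exfalso; apply: E2.
  apply: (subseq_perm_eq Ug HBs); first by rewrite -map_cons map_subseq.
  move=> y; rewrite {1}Bsplit /= mem_cat !inE -E1 /drop_at mem_cat; by rewrite orbCA.
- exfalso; apply: E1; rewrite /i0 E2 /= /g eqxx /drop_at /=.
  by rewrite drop0.
- by rewrite mulr0.
Qed.

Definition okm (R : realType) (f : mor R) := forall b c,
  (size b != size (mcod f)) || (size c != size (mdom f)) -> mcoef f b c = 0.

Lemma mor_eta (R : realType) (f : mor R) : f = Mor (mdom f) (mcod f) (mcoef f).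
Proof. by case: f. Qed.

Lemma ok_idm (R : realType) N : okm (@idm R N).
Proof.
move=> b c /= /orP[] /negbTE H; first by rewrite H andbF.
by case: eqP => [->|]; rewrite ?H.
Qed.

Lemma ok_sPf (R : realType) M N : okm (@sPf R M N).
Proof.
move=> b c /orP[] /negbTE H /=; first by rewrite H.
by move: H; case: c => [|x c] //= _; rewrite andbF.
Qed.

Lemma ok_sPfv (R : realType) M N : okm (@sPfv R M N).
Proof.
move=> b c /orP[] /negbTE H /=; last by rewrite H andbF.
by move: H; case: b.
Qed.

Lemma ok_comp (R : realType) (f g : mor R) : okm f -> okm g -> okm (Defs.comp g f).
Proof.
move=> Hf Hg b c /orP[] H /=.
  by apply: big1 => m _; rewrite Hg ?mul0r // H.
by apply: big1 => m _; rewrite Hf ?mulr0 // H orbT.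
Qed.

Lemma ok_tens (R : realType) (f g : mor R) : okm f -> okm g -> okm (tens f g).
Proof.
move=> Hf Hg b c /=; rewrite !size_cat => H.
case: (boolP ((size (take (size (mcod f)) b) != size (mcod f)) ||
              (size (take (size (mdom f)) c) != size (mdom f)))) => H1.
  by rewrite Hf ?mul0r.
rewrite Hg ?mulr0 //; move: H H1; rewrite !size_drop !size_take.
case: ltnP => h1; case: ltnP => h2 /=; lia.
Qed.

Lemma ok_dagger (R : realType) (f : mor R) : okm f -> okm (dagger f).
Proof. by move=> Hf b c H /=; rewrite Hf ?conjC0 // orbC. Qed.

Lemma ok_inP (R : realType) (f : mor R) : inP f -> okm f.
Proof.
elim=> *; by [apply: ok_sPf | apply: ok_sPfv | apply: ok_idm | apply: ok_comp | apply: ok_tens].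
Qed.

Lemma comp_idl (R : realType) (f : mor R) : okm f -> Defs.comp (@idm R (mcod f)) f = f.
Proof.
move=> Hf; rewrite [RHS]mor_eta /Defs.comp /=; congr Mor.
apply: functional_extensionality => b; apply: functional_extensionality => c.
rewrite (eq_bigr (fun m => if m == b then (if size b == size (mcod f) then mcoef f m c else 0) else 0)).
  rewrite sum_allbits_eq; case: eqP => // H; rewrite Hf //; by apply/orP; left; apply/eqP.
move=> m _; rewrite [b == m]eq_sym; case: eqP => [->|]; last by rewrite mul0r.
by case: (size b == _); rewrite ?mul1r ?mul0r.
Qed.

Lemma comp_idr (R : realType) (f : mor R) : okm f -> Defs.comp f (@idm R (mdom f)) = f.
Proof.
move=> Hf; rewrite [RHS]mor_eta /Defs.comp /=; congr Mor.
apply: functional_extensionality => b; apply: functional_extensionality => c.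
rewrite (eq_bigr (fun m => if m == c then (if size c == size (mdom f) then mcoef f b m else 0) else 0)).
  rewrite sum_allbits_eq; case: eqP => // H; rewrite Hf //; by apply/orP; right; apply/eqP.
move=> m _; case: eqP => [->|]; last by rewrite mulr0.
by case: (size c == _); rewrite ?mulr1 ?mulr0.
Qed.

Lemma comp_assoc (R : realType) (f g h : mor R) :
  Defs.comp h (Defs.comp g f) = Defs.comp (Defs.comp h g) f.
Proof.
rewrite /Defs.comp /=; congr Mor.
apply: functional_extensionality => b; apply: functional_extensionality => c.
under eq_bigr do rewrite mulr_sumr.
under [RHS]eq_bigr do rewrite mulr_suml.
rewrite exchange_big /=; apply: eq_bigr => m _; apply: eq_bigr => m' _.
by rewrite mulrA.
Qed.

Lemma ext2 (R : realType) (F G : seq bool -> seq bool -> R[i]) :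
  (forall b c, F b c = G b c) -> F = G.
Proof. by move=> H; do 2 (apply: functional_extensionality => ?); apply: H. Qed.

Lemma tens_idm (R : realType) N M : tens (@idm R N) (@idm R M) = @idm R (N ++ M).
Proof.
rewrite /tens /=; congr Mor; apply: ext2 => b c.
rewrite size_cat.
case: (boolP (b == c)) => [/eqP <-|Hbc].
  rewrite !eqxx /= size_take size_drop.
  case: ltnP => h; case: eqP => h1; case: eqP => h2; case: eqP => h3;
    rewrite ?mulr1 ?mulr0 ?mul0r //; lia.
rewrite andFb; case: (boolP (take (size N) b == take (size N) c)) => E1; rewrite /= ?mul0r //.
case: (boolP (drop (size N) b == drop (size N) c)) => E2; rewrite /= ?mulr0 //.
by move: Hbc; rewrite -(cat_take_drop (size N) b) -(cat_take_drop (size N) c) (eqP E1) (eqP E2) eqxx.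
Qed.

Lemma tens_unitl (R : realType) (f : mor R) : tens (@idm R [::]) f = f.
Proof.
rewrite [RHS]mor_eta /tens /=; congr Mor; apply: ext2 => b c.
by rewrite !take0 !drop0 /= mul1r.
Qed.

Lemma tens_unitr (R : realType) (f : mor R) : okm f -> tens f (@idm R [::]) = f.
Proof.
move=> Hf; rewrite [RHS]mor_eta /tens /= !cats0; congr Mor; apply: ext2 => b c.
case: (boolP (size b <= size (mcod f))%N) => hb; case: (boolP (size c <= size (mdom f))%N) => hc.
- by rewrite !take_oversize // !drop_oversize //= mulr1.
- rewrite (drop_oversize hb) [RHS]Hf; last by apply/orP; right; apply/eqP => E; by rewrite E leqnn in hc.
  have : drop (size (mdom f)) c != [::] by rewrite -size_eq0 size_drop subn_eq0.
  by rewrite eq_sym => /negbTE ->; rewrite mulr0.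
- have : size (drop (size (mcod f)) b) != 0%N by rewrite size_drop subn_eq0.
  move/negbTE => ->; rewrite andbF mulr0 [RHS]Hf //; apply/orP; left; apply/eqP => E; by rewrite E leqnn in hb.
- have : size (drop (size (mcod f)) b) != 0%N by rewrite size_drop subn_eq0.
  move/negbTE => ->; rewrite andbF mulr0 [RHS]Hf //; apply/orP; left; apply/eqP => E; by rewrite E leqnn in hb.
Qed.

Lemma tens_assoc (R : realType) (f g h : mor R) :
  tens (tens f g) h = tens f (tens g h).
Proof.
rewrite /tens /= !catA; congr Mor; apply: ext2 => b c.
rewrite !size_cat !take_takel ?leq_addr // !take_drop !drop_drop -!mulrA.
by rewrite [(size (mcod g) + _)%N]addnC [(size (mdom g) + _)%N]addnC.
Qed.

Lemma interchange (R : realType) (f f' g g' : mor R) :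
  mcod f = mdom g -> mcod f' = mdom g' ->
  tens (Defs.comp g f) (Defs.comp g' f') = Defs.comp (tens g g') (tens f f').
Proof.
move=> Hfg Hfg'; rewrite /tens /Defs.comp /=; congr Mor; apply: ext2 => b c.
rewrite size_cat sum_allbits_cat mulr_suml; apply: eq_big_seq => m1 Hm1.
rewrite mulr_sumr; apply: eq_big_seq => m2 Hm2.
have s1 := size_allbits Hm1; have s2 := size_allbits Hm2.
rewrite -Hfg take_size_cat // drop_size_cat //.
by rewrite mulrACA.
Qed.

Lemma dagger_idm (R : realType) N : dagger (@idm R N) = @idm R N.
Proof.
rewrite /dagger /=; congr Mor; apply: ext2 => b c.
rewrite [c == b]eq_sym; case: (boolP (b == c)) => [/eqP ->|] /=; last by rewrite conjC0.
by case: (_ == _); rewrite ?conjC1 ?conjC0.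
Qed.

Lemma dagger_dagger (R : realType) (f : mor R) : dagger (dagger f) = f.
Proof.
rewrite [RHS]mor_eta /dagger /=; congr Mor; apply: ext2 => b c; exact: conjCK.
Qed.

Lemma dagger_comp (R : realType) (f g : mor R) : mcod f = mdom g ->
  dagger (Defs.comp g f) = Defs.comp (dagger f) (dagger g).
Proof.
move=> H; rewrite /dagger /Defs.comp /= -H; congr Mor; apply: ext2 => b c.
rewrite rmorph_sum; apply: eq_bigr => m _; by rewrite rmorphM mulrC.
Qed.

Lemma dagger_tens (R : realType) (f g : mor R) :
  dagger (tens f g) = tens (dagger f) (dagger g).
Proof.
rewrite /dagger /tens /=; congr Mor; apply: ext2 => b c; by rewrite rmorphM.
Qed.

Lemma mem_lt_sumn (N : seq nat) x : x \in N -> (x < (sumn N).+1)%N.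
Proof.
elim: N => [|y N IH] //=; rewrite inE => /orP[/eqP ->|/IH]; lia.
Qed.

Definition Xsc (R : realType) (e : R[i]) (i j : nat) : R[i] :=
  if (i == 0%N) && (j == 1%N) then e else if (i == 1%N) && (j == 0%N) then - e else 0.

Definition sc (R : realType) (e : R[i]) : mor R :=
  Defs.comp (sPfv (Xsc e) [:: 0%N; 1%N]) (sPf (fun _ _ => 0) [:: 0%N; 1%N]).

Lemma inP_sc (R : realType) (e : R[i]) : inP (sc e).
Proof.
apply: inP_comp => //; [apply: inP_sPf|apply: inP_sPfv] => //.
- by move=> i j _ _; rewrite oppr0.
- move=> i j; rewrite !inE => /orP[] /eqP -> /orP[] /eqP -> ; rewrite /Xsc /= ?opprK ?oppr0 //.
Qed.

Lemma sc_coef (R : realType) (e : R[i]) : mcoef (sc e) [::] [::] = e.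
Proof.
have E : allbits 2 = [:: [:: false; false]; [:: false; true]; [:: true; false]; [:: true; true]] by [].
rewrite /sc /Defs.comp; cbn [mcoef mcod mdom sPf sPfv size]; rewrite E !big_cons big_nil /=.
rewrite !Pf_cons /= !big_ord0 ?big_ord1 /= !Pf_nil /Xsc /=.
by rewrite expr0 !mul1r !mulr1 !mul0r ?mulr0 !addr0 ?add0r.
Qed.

Lemma tens_sc (R : realType) (e : R[i]) (f : mor R) :
  tens (sc e) f = Mor (mdom f) (mcod f) (fun b c => e * mcoef f b c).
Proof.
rewrite /tens; cbn [mdom mcod sc Defs.comp sPf sPfv size cat]; congr Mor.
by apply: ext2 => b c; rewrite !take0 !drop0 sc_coef.
Qed.

Definition Bm (R : realType) (M : nat -> nat -> R[i]) s i j : R[i] :=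
  -1 * (M (i - s)%N (j - s)%N)^*.

Lemma Pf_B (R : realType) (M : nat -> nat -> R[i]) s L :
  Pf (Bm M s) (map (fun x => x + s)%N L) = (-1) ^+ (size L)./2 * (Pf M L)^*.
Proof.
rewrite (@Pf_map _ (fun x y => -1 * (M x y)^*)); last by move=> x y; rewrite /Bm !addnK.
by rewrite Pf_scale Pf_conj.
Qed.

Lemma sign_sq (R : realType) n : (-1) ^+ n * (-1) ^+ n = 1 :> R[i].
Proof. by rewrite -exprD addnn -mul2n exprM sqrrN !expr1n. Qed.

Lemma eps2 (R : realType) n : eps R n.+2 = - eps R n.
Proof. by rewrite /= exprS -mulrA [(-1) ^+ n * _]mulrA sign_sq mul1r mulN1r. Qed.

Lemma eps_sq (R : realType) n : eps R n * eps R n = 1.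
Proof.
elim: n => [|n IH] /=; first by rewrite mulr1.
by rewrite mulrACA sign_sq IH mulr1.
Qed.

Lemma eps_half (R : realType) n k : (k.*2 <= n)%N ->
  eps R (n - k.*2) * eps R n * (-1) ^+ k = 1.
Proof.
elim: k => [|k IH] H; first by rewrite subn0 expr0 mulr1 eps_sq.
have H' : (k.*2 <= n)%N by move: H; rewrite doubleS; lia.
have E : (n - k.*2 = (n - k.+1.*2).+2)%N by move: H; rewrite doubleS; lia.
rewrite -[RHS](IH H') E eps2 exprS; ring.
Qed.

Lemma mask_inj (N : seq nat) (m m' : seq bool) : uniq N ->
  size m = size N -> size m' = size N -> mask m N = mask m' N -> m = m'.
Proof.
elim: N m m' => [|x N IH] [|b m] [|b' m'] //= /andP [xN UN] [Hm] [Hm'].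
case: b; case: b' => E.
- by case: E => /(IH _ _ UN Hm Hm') ->.
- have : x \in mask m' N by rewrite -E mem_head.
  by move/mem_mask; rewrite (negbTE xN).
- have : x \in mask m N by rewrite E mem_head.
  by move/mem_mask; rewrite (negbTE xN).
- by rewrite (IH _ _ UN Hm Hm' E).
Qed.

Lemma match_cond (N : seq nat) s (m1 m2 : seq bool) : uniq N ->
  size m1 = size N -> size m2 = size N ->
  (mask m2 (map (fun x => x + s)%N N) == map (fun x => x + s)%N (mask m1 N)) = (m2 == m1).
Proof.
move=> UN H1 H2; rewrite -map_mask (inj_eq (inj_map (@addIn s))).
apply/eqP/eqP => [|->] //; exact: mask_inj.
Qed.

Lemma size_mask_neg (N : seq nat) (c : seq bool) : size c = size N ->
  size (mask (map negb c) N) = (size N - size (mask c N))%N.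
Proof.
move=> H; rewrite !size_mask ?size_map // count_map -H -(count_predC id c).
by rewrite addKn; apply: eq_count.
Qed.

Lemma Pf_fin (R : realType) (M : nat -> nat -> R[i]) (N : seq nat) (c : seq bool) :
  size c = size N ->
  eps R (size (mask (map negb c) N)) * eps R (size N) *
    ((-1) ^+ (size (mask c N))./2 * (Pf M (mask c N))^*) = (Pf M (mask c N))^*.
Proof.
move=> H; rewrite size_mask_neg //.
case: (boolP (odd (size (mask c N)))) => Ho; first by rewrite Pf_odd // conjC0 !mulr0.
have Hle : (size (mask c N) <= size N)%N by rewrite size_mask // -H count_size.
move: Ho Hle; set j := size (mask c N) => Ho Hle.
have E : j = (j./2).*2 by rewrite -{1}(odd_double_half j) (negbTE Ho).
rewrite E doubleK mulrA eps_half ?mul1r //; by rewrite -E.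
Qed.

Lemma dagger_sPf_eq (R : realType) (M : nat -> nat -> R[i]) (N : seq nat) :
  uniq N ->
  let s := (sumn N).+1 in
  let N' := map (fun x => x + s)%N N in
  dagger (sPf M N) =
  Defs.comp (sPfv (@Mc R s) (N ++ N'))
    (tens (tens (sc (eps R (size N))) (@idm R N)) (sPf (Bm M s) N')).
Proof.
move=> UN s N'.
rewrite tens_sc /dagger /Defs.comp /tens /=; rewrite cats0; congr Mor; apply: ext2 => b c.
have HN : all (fun x => x < s)%N N by apply/allP => x; apply: mem_lt_sumn.
case: (boolP (b == [::])) => Hb; last by rewrite andbF conjC0 big1 // => m _; rewrite andFb mul0r.
rewrite andbT /= size_cat /N' size_map sum_allbits_cat.
rewrite (eq_big_seq (fun m1 => if m1 == take (size N) c then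
   (if drop (size N) c == [::] then (Pf M (mask m1 N))^* else 0) else 0)).
  rewrite sum_allbits_eq size_take.
  case: (ltnP (size N) (size c)) => h.
    have -> : drop (size N) c == [::] = false.
      by apply/negbTE; rewrite -size_eq0 size_drop subn_eq0 -ltnNge.
    by rewrite (gtn_eqF h) conjC0; case: (_ == _).
  rewrite drop_oversize // eqxx take_oversize //.
  by case: eqP => //; rewrite conjC0.
move=> m1 Hm1; have s1 := size_allbits Hm1.
rewrite (eq_big_seq (fun m2 => if m2 == m1 then
   (if m1 == take (size N) c then
   (if drop (size N) c == [::] then (Pf M (mask m1 N))^* else 0) else 0) else 0)).
  by rewrite sum_allbits_eq s1 eqxx.
move=> m2 Hm2; have s2 := size_allbits Hm2.
rewrite map_cat mask_cat ?size_map // take_size_cat // drop_size_cat //.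
rewrite size_cat s1 s2 eqxx /=.
rewrite (Pf_match _ UN HN (mask_subseq _ _) (mask_subseq _ _)).
rewrite match_cond ?size_map //.
rewrite (inj_eq (inj_map (can_inj negbK))).
case: eqP => [->|]; last by rewrite mul0r.
rewrite eq_sym; case: eqP => _; last by rewrite mulr0 mul0r mulr0.
rewrite eqxx /=; case: eqP => _; last by rewrite !mulr0.
rewrite mulr1 -map_mask Pf_B mulrA; exact: Pf_fin.
Qed.

Lemma dagger_sPfv_eq (R : realType) (M : nat -> nat -> R[i]) (N : seq nat) :
  uniq N ->
  let s := (sumn N).+1 in
  let N' := map (fun x => x + s)%N N in
  dagger (sPfv M N) =
  Defs.comp (tens (tens (sc (eps R (size N))) (@idm R N)) (sPfv (Bm M s) N'))
    (sPf (@Mc R s) (N ++ N')).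
Proof.
move=> UN s N'.
rewrite tens_sc /dagger /Defs.comp /tens /=; rewrite cats0; congr Mor; apply: ext2 => b c.
have HN : all (fun x => x < s)%N N by apply/allP => x; apply: mem_lt_sumn.
case: (boolP (c == [::])) => Hc; last by rewrite andFb conjC0 big1 // => m _; rewrite andbF mulr0.
rewrite /= size_cat /N' size_map sum_allbits_cat.
rewrite (eq_big_seq (fun m1 => if m1 == take (size N) b then
   (if drop (size N) b == [::] then (Pf M (mask (map negb m1) N))^* else 0) else 0)).
  rewrite sum_allbits_eq size_take.
  case: (ltnP (size N) (size b)) => h.
    have -> : drop (size N) b == [::] = false.
      by apply/negbTE; rewrite -size_eq0 size_drop subn_eq0 -ltnNge.
    by rewrite (gtn_eqF h) conjC0; case: (_ == _).
  rewrite drop_oversize // eqxx take_oversize //.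
  by case: eqP => //; rewrite conjC0.
move=> m1 Hm1; have s1 := size_allbits Hm1.
rewrite (eq_big_seq (fun m2 => if m2 == m1 then
   (if m1 == take (size N) b then
   (if drop (size N) b == [::] then (Pf M (mask (map negb m1) N))^* else 0) else 0) else 0)).
  by rewrite sum_allbits_eq s1 eqxx.
move=> m2 Hm2; have s2 := size_allbits Hm2.
rewrite mask_cat // take_size_cat // drop_size_cat //.
rewrite size_cat s1 s2 eqxx /=.
rewrite (Pf_match _ UN HN (mask_subseq _ _) (mask_subseq _ _)).
rewrite match_cond //.
rewrite eqxx andbT /=.
case: (boolP (m2 == m1)) => [/eqP ->|Hne]; last by rewrite mulr0.
case: (boolP (take (size N) b == m1)) => E1; last first.
  rewrite [in RHS]ifF; last by apply/negP => /eqP E; rewrite E eqxx in E1.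
  by rewrite /= mulr0 !mul0r.
move/eqP: E1 => E1; subst m1; rewrite eqxx /= size_take.
case: (ltnP (size N) (size b)) => h.
  have -> : drop (size N) b == [::] = false.
    by apply/negbTE; rewrite -size_eq0 size_drop subn_eq0 -ltnNge.
  by rewrite mulr0 mul0r.
rewrite drop_oversize // eqxx take_oversize // /=.
have sb : size b = size N by move: s1; rewrite take_oversize.
have sb' : size (map negb b) = size N by rewrite size_map.
rewrite sb eqxx mulr1 -map_mask Pf_B -[in RHS](Pf_fin M sb').
rewrite (mapK negbK); set X := (Pf M _)^*; ring.
Qed.

Lemma skew_Mc (R : realType) s L : (0 < s)%N -> skew_on (@Mc R s) L.
Proof.
move=> s0 i j _ _; rewrite /Mc.
have [Hj|Hj] := eqVneq j (i + s)%N.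
  have [Hi|Hi] := eqVneq i (j + s)%N; first by lia.
  by rewrite opprK.
have [Hi|Hi] := eqVneq i (j + s)%N; first by [].
by rewrite oppr0.
Qed.

Lemma skew_Bm (R : realType) (M : nat -> nat -> R[i]) N s :
  skew_on M N -> skew_on (Bm M s) (map (fun x => x + s)%N N).
Proof.
move=> SM i j /mapP [x Hx ->] /mapP [y Hy ->]; rewrite /Bm !addnK (SM _ _ Hx Hy).
by rewrite rmorphN mulrN mulNr.
Qed.

Lemma uniq_NN (N : seq nat) : uniq N ->
  uniq (N ++ map (fun x => x + (sumn N).+1)%N N).
Proof.
move=> UN; rewrite cat_uniq UN map_inj_uniq /= ?andbT; last exact: addIn.
rewrite UN andbT; apply/hasPn => y /mapP [x Hx ->]; apply/negP => H.
have := mem_lt_sumn H; lia.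
Qed.

Lemma inP_dagger_sPf (R : realType) M N : uniq N -> skew_on M N -> inP (dagger (@sPf R M N)).
Proof.
move=> UN SM; rewrite (dagger_sPf_eq M UN).
apply: inP_comp => //.
  apply: inP_tens; first by apply: inP_tens; [apply: inP_sc | apply: inP_id].
  apply: inP_sPf; first by rewrite map_inj_uniq //; exact: addIn.
  exact: skew_Bm.
apply: inP_sPfv; first exact: uniq_NN.
exact: skew_Mc.
Qed.

Lemma inP_dagger_sPfv (R : realType) M N : uniq N -> skew_on M N -> inP (dagger (@sPfv R M N)).
Proof.
move=> UN SM; rewrite (dagger_sPfv_eq M UN).
apply: inP_comp => //.
  apply: inP_sPf; first exact: uniq_NN.
  exact: skew_Mc.
apply: inP_tens; first by apply: inP_tens; [apply: inP_sc | apply: inP_id].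
apply: inP_sPfv; first by rewrite map_inj_uniq //; exact: addIn.
exact: skew_Bm.
Qed.

Lemma inP_dagger (R : realType) (f : mor R) : inP f -> inP (dagger f).
Proof.
elim=> {f}.
- by move=> M N; apply: inP_dagger_sPf.
- by move=> M N; apply: inP_dagger_sPfv.
- by move=> N; rewrite dagger_idm; apply: inP_id.
- move=> g f Hf IHf Hg IHg H; rewrite dagger_comp //; apply: inP_comp => //.
- by move=> f g Hf IHf Hg IHg; rewrite dagger_tens; apply: inP_tens.
Qed.

Theorem mainTheorem8 (R : realType) : strict_monoidal_dagger_cat (@inP R).
Proof.
split; first exact: inP_id.
split; first by move=> f g Hf Hg H; apply: inP_comp.
split; first by move=> f Hf; have ok := ok_inP Hf; split; [apply: comp_idl | apply: comp_idr].
split; first by move=> f g h *; apply: comp_assoc.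
split; first by move=> f g Hf Hg; apply: inP_tens.
split; first by move=> N M; apply: tens_idm.
split; first by move=> f Hf; split; [apply: tens_unitl | apply: tens_unitr; apply: ok_inP].
split; first by move=> f g h *; apply: tens_assoc.
split; first by move=> f f' g g' _ _ _ _; apply: interchange.
split; first exact: inP_dagger.
split; first exact: dagger_idm.
split; first by move=> f _; apply: dagger_dagger.
split; first by move=> f g _ _; apply: dagger_comp.
by move=> f g _ _; apply: dagger_tens.
Qed.
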